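(* Let $\overline{G}$ be the roommate diversity game described in the context. For every outcome $\pi$ of $\overline{G}$ that is not top-type, there exists a top-type outcome $\pi'$ that is more popular than $\pi$, i.e. $\phi(\pi',\pi)>0$.
   Context: In a roommate diversity game with agent set $N=R\cup B$ ($R$ red, $B$ blue) and room size $s$, an outcome is a partition of $N$ into rooms of size $s$; $\pi(a)$ is the room containing $a$ and $\theta(C)=|C\cap R|/|C|$. Each agent $a$ has a trichotomous preference given by a partition of the fractions into sets $D_a^+$ (approved), $D_a^n$ (neutral), $D_a^-$ (disapproved), possibly empty, with approved $\succ$ neutral $\succ$ disapproved and indifference within each set. Agent $a$ prefers $\pi$ to $\pi'$ if it strictly prefers $\theta(\pi(a))$ to $\theta(\pi'(a))$; $N(\pi,\pi')$ is the set of agents preferring $\pi$ to $\pi'$ and $\phi(\pi,\pi')=|N(\pi,\pi')|-|N(\pi',\pi)|$. The game $\overline{G}$: $R=\{r_1,r_2,r_3\}$, $B=\{b_1,\dots,b_6\}$, $s=3$; $r_1$: $D^+=\{1/3\}$, $D^-=\{2/3,1\}$; $r_2,r_3$: $D^+=\{2/3\}$, $D^-=\{1/3,1\}$; $b_1,\dots,b_4$: $D^+=\{1/3\}$, $D^n=\{2/3\}$, $D^-=\{0\}$; $b_5,b_6$: $D^+=\{0\}$, $D^-=\{1/3,2/3\}$ (a red agent is never in a room of fraction $0$, a blue agent never in one of fraction $1$). An outcome is top-type if it equals $\{\{r_1,\hat b_1,\hat b_2\},\{r_2,r_3,\hat b_3\},\{b_5,b_6,\hat b_4\}\}$ for some enumeration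 $\hat b_1,\dots,\hat b_4$ of $\{b_1,b_2,b_3,b_4\}$. *)

(* Defs.v *)
From mathcomp Require Import all_boot all_order all_algebra all_fingroup.
Set Implicit Arguments. Unset Strict Implicit. Unset Printing Implicit Defensive.
Import GRing.Theory Num.Theory.
Local Open Scope ring_scope.

(* Agents of the game G-bar: 'I_9, with 0,1,2 = r1,r2,r3 (red) and
   3,...,8 = b1,...,b6 (blue). *)
Definition agent := 'I_9.
Definition red : {set agent} := [set a : agent | (val a < 3)%N].
Definition room_size := 3%N.

Definition r1 : agent := inord 0.
Definition r2 : agent := inord 1.
Definition r3 : agent := inord 2.
(* b i = b_{i+1} *)
Definition b (i : nat) : agent := inord (3 + i).

Definition outcome (P : {set {set agent}}) : Prop :=
  partition P [set: agent] /\ (forall C, C \in P -> #|C| = room_size).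

Definition theta (C : {set agent}) : rat := (#|C :&: red|)%:R / (#|C|)%:R.

Definition room (P : {set {set agent}}) (a : agent) : {set agent} := pblock P a.

(* Trichotomous preferences: approved / neutral sets; everything else is
   disapproved. *)
Definition approved (a : agent) (x : rat) : bool :=
  if (a == r1) then x == 1/3
  else if (a == r2) || (a == r3) then x == 2/3
  else if (a == b 0) || (a == b 1) || (a == b 2) || (a == b 3) then x == 1/3
  else x == 0.

Definition neutral (a : agent) (x : rat) : bool :=
  if (a == b 0) || (a == b 1) || (a == b 2) || (a == b 3) then x == 2/3
  else false.

Definition util (a : agent) (x : rat) : nat :=
  if approved a x then 2 else if neutral a x then 1 else 0.

Definition prefers (a : agent) (P Q : {set {set agent}}) : bool :=
  (util a (theta (room Q a)) < util a (theta (room P a)))%N.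

Definition Npref (P Q : {set {set agent}}) : nat := #|[set a | prefers a P Q]|.
Definition phi (P Q : {set {set agent}}) : int := (Npref P Q)%:Z - (Npref Q P)%:Z.

Definition top_type (P : {set {set agent}}) : Prop :=
  exists s : {perm 'I_4},
    P = [set [set r1; b (s ord0); b (s (inord 1))];
             [set r2; r3; b (s (inord 2))];
             [set b 4; b 5; b (s (inord 3))]].

(* Main.v *)
Require Import Defs.
From mathcomp Require Import all_boot all_order all_algebra all_fingroup.
From mathcomp Require Import zify.
Set Implicit Arguments. Unset Strict Implicit. Unset Printing Implicit Defensive.
Import GRing.Theory Num.Theory.

Definition ag := iota 0 9.
Definition ag4 := iota 0 4.
Fixpoint uniqn (s : seq nat) : bool := if s is x :: s' then (if has (eqn x) s' then false else uniqn s') else true.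
Definition inl3 (x y z : nat) : pred nat := fun t => if eqn t x then true else if eqn t y then true else eqn t z.
Definition isred (t : nat) := (t < 3)%N.
Definition cutilN (a : nat) (r : nat) : nat :=
  if eqn a 0 then (if eqn r 1 then 2 else 0)
  else if (a < 3)%N then (if eqn r 2 then 2 else 0)
  else if (a < 7)%N then (if eqn r 1 then 2 else if eqn r 2 then 1 else 0)
  else (if eqn r 0 then 2 else 0).
Definition uP (p : pred nat) a := cutilN a (count (fun t => if p t then isred t else false) ag).
Definition R3 (pA pB : pred nat) (a : nat) : pred nat :=
  if pA a then pA else if pB a then pB else (fun t => if pA t then false else ~~ pB t).
Definition better (RQ RP : nat -> pred nat) : bool :=
  (count (fun a => uP (RQ a) a < uP (RP a) a) ag < count (fun a => uP (RP a) a < uP (RQ a) a) ag)%N.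
Definition RQf (i j k : nat) := R3 (inl3 0 (3+i) (3+j)) (inl3 1 2 (3+k)).
Definition sameR (R R' : nat -> pred nat) := all (fun a => all (fun t => eqb (R a t) (R' a t)) ag) ag.
Definition okP (RP : nat -> pred nat) :=
  has (fun i => has (fun j => if (i < j)%N then has (fun k => if uniqn [::i;j;k] then
     (if better (RQf i j k) RP then true else sameR RP (RQf i j k)) else false) ag4 else false) ag4) ag4.
Definition check :=
 all (fun e1 => all (fun e2 => if (e1 < e2)%N then all (fun u => all (fun v => if (u < v)%N then all (fun w =>
   if (v < w)%N then (if uniqn [::0;e1;e2;u;v;w] then okP (R3 (inl3 0 e1 e2) (inl3 u v w)) else true) else true) ag else true) ag) ag else true) ag) ag.

Lemma check_ok : check. Proof. by vm_compute. Qed.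

Lemma eqnP' (m n : nat) : eqn m n = (m == n). Proof. by []. Qed.

Lemma uniqnE s : uniqn s = uniq s.
Proof.
elim: s => //= x s ->; rewrite -has_pred1.
have -> : has (eqn x) s = has (pred1 x) s by apply: eq_has => y /=; rewrite eq_sym.
by case: has.
Qed.

Lemma e9 : map val (enum 'I_9) = ag. Proof. exact: val_enum_ord. Qed.

Lemma card_agentP (P : pred agent) (p : pred nat) :
  (forall z, P z = p (val z)) -> #|P| = count p ag.
Proof.
move=> H; rewrite cardE /enum_mem size_filter -e9 enumT count_map.
by apply: eq_count => z /=; apply: H.
Qed.

Lemma val_inord9 n : (n < 9)%N -> val (inord n : 'I_9) = n.
Proof. exact: inordK. Qed.

Lemma eq_agent (a : agent) n : (n < 9)%N -> (a == inord n) = (val a == n).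
Proof. by move=> H; rewrite -val_eqE /= inordK. Qed.

Lemma val_b n : (n < 6)%N -> val (b n) = 3 + n.
Proof. by move=> H; rewrite /b; apply: inordK; rewrite -[9]/(3+6) ltn_add2l. Qed.

Lemma utilE (a : agent) (r : nat) : (r <= 3)%N -> util a (r%:R / 3%:R)%R = cutilN (val a) r.
Proof.
move=> Hr; rewrite /util /approved /neutral /r1 /r2 /r3 /b !eq_agent //.
move: (val a) (ltn_ord a) => m Hm.
case: r Hr => [|[|[|[|r]]]] // _;
do 9?[case: m Hm => [|m] Hm]; by vm_compute.
Qed.

Lemma card_setP (S : {set agent}) (p : pred nat) :
  (forall z, (z \in S) = p (val z)) -> #|S| = count p ag.
Proof.
move=> H; have -> : #|S| = #|[pred z | z \in S]| by apply: eq_card.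
by apply: card_agentP => z /=; rewrite H.
Qed.

Definition roomspec (P : {set {set agent}}) (R : nat -> pred nat) :=
  forall a : agent, #|room P a| = 3 /\ forall z, (z \in room P a) = R (val a) (val z).

Lemma util_theta (S : {set agent}) (p : pred nat) (a : agent) :
  #|S| = 3 -> (forall z, (z \in S) = p (val z)) -> util a (theta S) = uP p (val a).
Proof.
move=> HS Hp; rewrite /theta HS /uP.
have Hc : #|S :&: red| = count (fun t => if p t then isred t else false) ag.
  apply: card_setP => z; rewrite !inE Hp /isred. by case: (p _).
rewrite -Hc utilE //. by rewrite -[X in (_ <= X)%N]HS subset_leq_card // subsetIl.
Qed.

Lemma Npref_count P Q RP RQ : roomspec P RP -> roomspec Q RQ ->
  Npref Q P = count (fun m => uP (RP m) m < uP (RQ m) m)%N ag.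
Proof.
move=> HP HQ; rewrite /Npref; apply: card_setP => a; rewrite inE /prefers.
have [HP1 HP2] := HP a; have [HQ1 HQ2] := HQ a.
by rewrite (util_theta _ HP1 HP2) (util_theta _ HQ1 HQ2).
Qed.

Lemma phi_pos P Q RP RQ : roomspec P RP -> roomspec Q RQ -> better RQ RP -> (0 < phi Q P)%R.
Proof.
move=> HP HQ; rewrite /better /phi (Npref_count HP HQ) (Npref_count HQ HP).
by move=> H; rewrite subr_gt0 ltz_nat.
Qed.

Lemma outcome_rooms P : outcome P -> P = [set room P a | a in [set: agent]].
Proof.
case=> /and3P [/eqP cov triv n0] _.
apply/setP => B; apply/idP/imsetP => [BP | [x _ ->]].
- have : B != set0 by apply: contraNneq n0 => <-.
  case/set0Pn => x xB; exists x; first by rewrite inE.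
  by rewrite /room (def_pblock triv BP xB).
- by rewrite /room pblock_mem // cov inE.
Qed.

Lemma outcome_eq P Q : outcome P -> outcome Q -> (forall a, room P a = room Q a) -> P = Q.
Proof.
move=> HP HQ H; rewrite (outcome_rooms HP) (outcome_rooms HQ).
by apply: eq_imset.
Qed.

Lemma mem_ag (a : agent) : val a \in ag.
Proof. by rewrite mem_iota /= ltn_ord. Qed.

Lemma sameR_room P Q RP RQ : roomspec P RP -> roomspec Q RQ -> sameR RP RQ ->
  forall a, room P a = room Q a.
Proof.
move=> HP HQ /allP H a; apply/setP => z.
rewrite (proj2 (HP a)) (proj2 (HQ a)).
have /allP H2 := H _ (mem_ag a).
exact/eqP/(H2 _ (mem_ag z)).
Qed.

Lemma inl3E x y z t : inl3 x y z t = (t \in [:: x; y; z]).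
Proof. by rewrite !inE. Qed.

Lemma sorted_enum_val (A : {set agent}) : sorted ltn (map val (enum A)).
Proof.
rewrite /enum_mem sorted_map; apply: sorted_filter.
  by move=> x y z /=; apply: ltn_trans.
by rewrite -sorted_map -enumT e9 iota_ltn_sorted.
Qed.

Lemma list3 (A : {set agent}) : #|A| = 3 -> exists x y z,
  [/\ map val (enum A) = [:: x; y; z], (x < y < z)%N & forall t : agent, (t \in A) = inl3 x y z (val t)].
Proof.
move=> HA; have := sorted_enum_val A.
have Hs : size (map val (enum A)) = 3 by rewrite size_map -cardE.
have Hm : forall t : agent, (t \in A) = (val t \in map val (enum A)).
  by move=> t; rewrite mem_map ?mem_enum //; exact: val_inj.
move: Hs Hm; case: (map val (enum A)) => [|x [|y [|z [|]]]] //= _ Hm /and3P [xy yz _].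
by exists x, y, z; split => //; [rewrite xy yz | move=> t; rewrite Hm inl3E].
Qed.

Lemma P_struct P : outcome P -> exists e1 e2 u v w,
  [/\ (e1 < e2)%N, (u < v)%N, (v < w)%N, uniq [:: 0; e1; e2; u; v; w] & all (fun x => x < 9)%N [:: e1; e2; u; v; w]]
  /\ roomspec P (R3 (inl3 0 e1 e2) (inl3 u v w)).
Proof.
move=> HP; case: (HP) => /and3P [/eqP cov triv n0] Hc.
have F1 : forall a, a \in room P a by move=> a; rewrite /room mem_pblock cov inE.
have F2 : forall a, #|room P a| = 3 by move=> a; apply: Hc; rewrite /room pblock_mem // cov inE.
have F3 : forall a z, z \in room P a -> room P z = room P a by move=> a z; exact: same_pblock.
have [x0 [e1 [e2 [EA /andP [x0e1 e1e2] HA]]]] := list3 (F2 r1).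
have x00 : x0 = 0.
  move: (F1 r1); rewrite HA /r1 val_inord9 // inl3E !inE.
  by case/or3P => /eqP E; lia.
have [m mA] : exists m, m \notin room P r1.
  case: (pickP (fun m => m \notin room P r1)) => [m Hm | H]; first by exists m.
  have : #|room P r1| = #|[set: agent]|.
    by apply: eq_card => z; rewrite inE; move: (H z) => /= /negbFE ->.
  by rewrite F2 cardsT card_ord.
have [u [v [w [EB /andP [uv vw] HB]]]] := list3 (F2 m).
have disj : forall z, z \in room P r1 -> z \in room P m -> False.
  move=> z zA zB; have E : room P r1 = room P m by rewrite -(F3 _ _ zA) (F3 _ _ zB).
  by move: mA; rewrite E F1.
exists e1, e2, u, v, w; split.
  split => //.
  - have -> : [:: 0; e1; e2; u; v; w] = map val (enum (room P r1) ++ enum (room P m)).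
      by rewrite map_cat EA EB x00.
    rewrite map_inj_uniq; last exact: val_inj.
    rewrite cat_uniq !enum_uniq /= andbT.
    apply/hasPn => z; rewrite !mem_enum => zB; apply/negP => zA; exact: disj zA zB.
  - have Hall : all (fun x => x < 9)%N (map val (enum (room P r1)) ++ map val (enum (room P m))).
      by rewrite all_cat !all_map; apply/andP; split; apply/allP => t _; exact: ltn_ord.
    by rewrite EA EB in Hall; case/andP: Hall.
move=> a; split; first exact: F2.
move=> z.
have HA' : forall t, inl3 0 e1 e2 (val t) = (t \in room P r1) by move=> t; rewrite HA x00.
have HB' : forall t, inl3 u v w (val t) = (t \in room P m) by move=> t; rewrite HB.
rewrite /R3 HA'.
case: ifP => aA; first by rewrite HA' (F3 _ _ aA).
rewrite HB'.
case: ifP => aB; first by rewrite HB' (F3 _ _ aB).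
rewrite HA' HB'.
have dA : forall t, t \in room P a -> t \in room P r1 -> False.
  move=> t ta tA; have E : room P a = room P r1 by rewrite -(F3 _ _ ta) (F3 _ _ tA).
  by move: (F1 a); rewrite E aA.
have dB : forall t, t \in room P a -> t \in room P m -> False.
  move=> t ta tA; have E : room P a = room P m by rewrite -(F3 _ _ ta) (F3 _ _ tA).
  by move: (F1 a); rewrite E aB.
have sub : room P a \subset ~: (room P r1 :|: room P m).
  apply/subsetP => t ta; rewrite !inE negb_or; apply/andP; split; apply/negP => ?;
    [exact: dA ta _ | exact: dB ta _].
have cardD : #|~: (room P r1 :|: room P m)| = 3.
  have H6 : #|room P r1 :|: room P m| = 6.
    rewrite cardsU !F2.
    have -> : room P r1 :&: room P m = set0.
      apply/setP => t; rewrite !inE; apply/negP => /andP [t1 t2]; exact: disj t1 t2.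
    by rewrite cards0.
  have := cardsC (room P r1 :|: room P m); rewrite H6 card_ord => H; lia.
have E : room P a = ~: (room P r1 :|: room P m).
  by apply/eqP; rewrite eqEcard sub cardD F2.
by rewrite E !inE negb_or; case: (z \in room P r1).
Qed.

Definition R3' (pA pB pC : pred nat) (a : nat) : pred nat :=
  if pA a then pA else if pB a then pB else pC.

Definition qfacts :=
 all (fun i => all (fun j => all (fun k =>
   if (i < j)%N then if uniqn [:: i; j; k] then
     let l := 6 - i - j - k in
     [&& (l < 4)%N, uniqn [:: i; j; k; l],
         count (inl3 0 (3+i) (3+j)) ag == 3, count (inl3 1 2 (3+k)) ag == 3, count (inl3 7 8 (3+l)) ag == 3,
         all (fun t => inl3 0 (3+i) (3+j) t + inl3 1 2 (3+k) t + inl3 7 8 (3+l) t == 1)%N ag &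
         sameR (RQf i j k) (R3' (inl3 0 (3+i) (3+j)) (inl3 1 2 (3+k)) (inl3 7 8 (3+l)))]
   else true else true) ag4) ag4) ag4.

Lemma qfacts_ok : qfacts. Proof. by vm_compute. Qed.

Lemma roomspec_ext P R R' : roomspec P R -> (forall m t, (m < 9)%N -> (t < 9)%N -> R m t = R' m t) ->
  roomspec P R'.
Proof.
move=> H E a; have [H1 H2] := H a; split => // z.
by rewrite H2 E // ltn_ord.
Qed.

Lemma three_part (A B C : {set agent}) (pA pB pC : pred nat) :
  (forall z, (z \in A) = pA (val z)) -> (forall z, (z \in B) = pB (val z)) ->
  (forall z, (z \in C) = pC (val z)) ->
  count pA ag = 3 -> count pB ag = 3 -> count pC ag = 3 ->
  (forall t, t < 9 -> pA t + pB t + pC t = 1)%N ->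
  outcome [set A; B; C] /\ roomspec [set A; B; C] (R3' pA pB pC).
Proof.
move=> HA HB HC cA cB cC one.
have cA' : #|A| = 3 by rewrite (card_setP HA).
have cB' : #|B| = 3 by rewrite (card_setP HB).
have cC' : #|C| = 3 by rewrite (card_setP HC).
have one' : forall z : agent, ((z \in A) + (z \in B) + (z \in C) = 1)%N.
  by move=> z; rewrite HA HB HC one // ltn_ord.
have triv : trivIset [set A; B; C].
  apply/trivIsetP => X Y; rewrite !inE => /orP [/orP [] | ] /eqP -> /orP [/orP [] | ] /eqP -> //;
  rewrite ?eqxx // => _; rewrite -setI_eq0; apply/eqP/setP => z; rewrite !inE;
  move: (one' z); by case: (z \in A); case: (z \in B); case: (z \in C).
have AP : A \in [set A; B; C] by rewrite !inE eqxx.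
have BP : B \in [set A; B; C] by rewrite !inE eqxx orbT.
have CP : C \in [set A; B; C] by rewrite !inE eqxx !orbT.
split.
  split.
    apply/and3P; split => //.
    - apply/eqP/setP => z; rewrite inE; apply/bigcupP.
      move: (one' z); case zA: (z \in A); first by exists A.
      case zB: (z \in B); first by exists B.
      case zC: (z \in C); first by exists C.
      by [].
    - rewrite !inE; apply/negP; case/orP => [/orP [] | ] /eqP E;
        [move: cA' | move: cB' | move: cC']; by rewrite -E cards0.
  by move=> X; rewrite !inE => /orP [/orP [] | ] /eqP ->.
move=> a; rewrite /room /R3' -HA -HB.
case aA: (a \in A); first by rewrite (def_pblock triv AP aA); split => // z; rewrite HA.
case aB: (a \in B); first by rewrite (def_pblock triv BP aB); split => // z; rewrite HB.
have aC : a \in C by move: (one' a); rewrite aA aB; case: (a \in C).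
by rewrite (def_pblock triv CP aC); split => // z; rewrite HC.
Qed.

Lemma mem_iota_ltn t : (t < 9)%N -> t \in ag. Proof. by rewrite mem_iota. Qed.

Lemma Q_struct (i j k : nat) : (i < j)%N -> i \in ag4 -> j \in ag4 -> k \in ag4 -> uniqn [:: i; j; k] ->
  exists Q, [/\ outcome Q, top_type Q & roomspec Q (RQf i j k)].
Proof.
move=> hij hi hj hk hu.
have := qfacts_ok; rewrite /qfacts.
move/allP/(_ i hi)/allP/(_ j hj)/allP/(_ k hk); rewrite hij hu.
case/and5P => hl hul cA cB /and3P [cC one same].
set l := 6 - i - j - k in hl hul cA cB cC one same *.
have hi4 : (i < 4)%N by move: hi; rewrite mem_iota.
have hj4 : (j < 4)%N by move: hj; rewrite mem_iota.
have hk4 : (k < 4)%N by move: hk; rewrite mem_iota.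
pose I : 'I_4 := inord i. pose J : 'I_4 := inord j.
pose K : 'I_4 := inord k. pose L : 'I_4 := inord l.
have vI : (I : nat) = i by rewrite /= inordK.
have vJ : (J : nat) = j by rewrite /= inordK.
have vK : (K : nat) = k by rewrite /= inordK.
have vL : (L : nat) = l by rewrite /= inordK.
have uL : uniq [:: I; J; K; L].
  have H : uniq [:: i; j; k; l] by rewrite -uniqnE.
  by rewrite -(map_inj_uniq val_inj) /= vI vJ vK vL; exact: H.
pose g := fun n : 'I_4 => nth I [:: I; J; K; L] n.
have ginj : injective g.
  by move=> x y /eqP; rewrite /g nth_uniq // => /eqP /val_inj.
pose s := perm ginj.
have s0 : s ord0 = I by rewrite permE.
have s1 : s (inord 1) = J by rewrite permE /g inordK.
have s2 : s (inord 2) = K by rewrite permE /g inordK.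
have s3 : s (inord 3) = L by rewrite permE /g inordK.
pose Q := [set [set r1; b (s ord0); b (s (inord 1))];
             [set r2; r3; b (s (inord 2))];
             [set b 4; b 5; b (s (inord 3))]].
have [HQ HR] : outcome Q /\ roomspec Q (R3' (inl3 0 (3+i) (3+j)) (inl3 1 2 (3+k)) (inl3 7 8 (3+l))).
  apply: three_part; rewrite ?(eqP cA) ?(eqP cB) ?(eqP cC) //.
  - move=> z; rewrite s0 s1 inl3E !inE /r1 /b vI vJ !eq_agent -?orbA //; lia.
  - move=> z; rewrite s2 inl3E !inE /r2 /r3 /b vK !eq_agent -?orbA //; lia.
  - move=> z; rewrite s3 inl3E !inE /b vL !eq_agent -?orbA //; lia.
  - move=> t ht; apply/eqP; exact: (allP one t (mem_iota_ltn ht)).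
exists Q; split => //; first by exists s.
apply: (roomspec_ext HR) => m t hm ht.
have /allP := allP same m (mem_iota_ltn hm).
by move/(_ t (mem_iota_ltn ht))/eqP.
Qed.

Theorem mainTheorem8 (P : {set {set agent}}) :
  outcome P -> ~ top_type P ->
  exists Q : {set {set agent}}, outcome Q /\ top_type Q /\ (0 < phi Q P)%R.
Proof.
move=> HP nT.
have [e1 [e2 [u [v [w [[h1 h2 h3 hu hall] HR]]]]]] := P_struct HP.
case/and5P: hall => he1 he2 hu9 hv9 /andP [hw9 _].
have := check_ok; rewrite /check.
move/allP/(_ e1 (mem_iota_ltn he1))/allP/(_ e2 (mem_iota_ltn he2)); rewrite h1.
move/allP/(_ u (mem_iota_ltn hu9))/allP/(_ v (mem_iota_ltn hv9)); rewrite h2.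
move/allP/(_ w (mem_iota_ltn hw9)); rewrite h3 uniqnE hu.
case/hasP => i hi /hasP [j hj]; case: ifP => // hij /hasP [k hk]; case: ifP => // hu3 Hbs.
have [Q [HQ TQ RQ]] := Q_struct hij hi hj hk hu3.
move: Hbs; case: ifP => [Hb _ | _ Hs].
  by exists Q; split => //; split => //; exact: (phi_pos HR RQ Hb).
exfalso; apply: nT; rewrite (outcome_eq HP HQ (sameR_room HR RQ Hs)); exact: TQ.
Qed.
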